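(* Let $X$ be a finite-dimensional real vector space and $\phi:X\to\mathbf{R}$ a strictly convex norm that is continuously differentiable on $X\setminus\{0\}$. Let $S=\partial\{z:\phi(z)\le1\}$, $\xi:X\setminus\{0\}\to S$, $\xi(x)=x/\phi(x)$, and $\pi(\eta)=\mathrm{D}\xi(\eta)\in\mathrm{Hom}(X,X)$ for $\eta\in S$. Let $0<\varepsilon<1$ and $$R=\sup\Bigl(\mathbf{R}\cap\bigl\{r:0<r<1,\ \text{and for all }\eta,\zeta\in S,\ \phi(\eta-\zeta)\le r\Rightarrow\|\pi(\eta)-\pi(\zeta)\|_\phi\le1-\varepsilon\bigr\}\Bigr).$$ Then for every $\eta\in S$ the map $\pi(\eta)$ restricted to $S\cap\{z:\phi(z-\eta)\le R\}$ is injective.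
   Context: A norm $\phi$ is strictly convex if $\phi(a+b)=\phi(a)+\phi(b)$ implies $\phi(b)a=\phi(a)b$. For $L\in\mathrm{Hom}(X,X)$, $\|L\|_\phi=\sup\{\phi(Lx):\phi(x)\le1\}$. *)

(* Defs.v *)
From HB Require Import structures.
From mathcomp Require Import all_boot all_order all_algebra.
From mathcomp Require Import all_classical all_reals all_analysis.
Set Implicit Arguments. Unset Strict Implicit. Unset Printing Implicit Defensive.
Import Order.TTheory GRing.Theory Num.Theory.
Import numFieldNormedType.Exports.
Local Open Scope classical_set_scope.
Local Open Scope ring_scope.

(* X = R^n, the model of an n-dimensional real vector space. *)
Notation vecX R n := ('rV[R]_n).

Definition fed_is_norm (R : realType) (n : nat) (phi : vecX R n -> R) : Prop :=
  [/\ forall x, phi x = 0 -> x = 0,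
      forall (c : R) x, phi (c *: x) = `|c| * phi x &
      forall x y, phi (x + y) <= phi x + phi y].

Definition fed_strictly_convex (R : realType) (n : nat) (phi : vecX R n -> R) : Prop :=
  forall a b, phi (a + b) = phi a + phi b -> phi b *: a = phi a *: b.

Definition fed_C1_off_zero (R : realType) (n : nat) (phi : vecX R n -> R) : Prop :=
  (forall x, x != 0 -> differentiable phi x) /\
  (forall v, {in [set x | x != 0], continuous (fun x => 'd phi x v)}).

(* the unit sphere S = boundary of {z | phi z <= 1} *)
Definition fed_sphere (R : realType) (n : nat) (phi : vecX R n -> R)
  : set (vecX R n) := [set z | phi z = 1].

Definition fed_xi (R : realType) (n : nat) (phi : vecX R n -> R) (x : vecX R n)
  : vecX R n := (phi x)^-1 *: x.

Definition fed_pi (R : realType) (n : nat) (phi : vecX R n -> R) (eta : vecX R n)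
  : vecX R n -> vecX R n := 'd (fed_xi phi) eta.

Definition fed_opnorm (R : realType) (n : nat) (phi : vecX R n -> R)
  (L : vecX R n -> vecX R n) : R :=
  sup [set phi (L x) | x in [set x | phi x <= 1]].

Definition fed_radius (R : realType) (n : nat) (phi : vecX R n -> R) (eps : R) : R :=
  sup [set r : R | 0 < r < 1 /\
        forall eta zeta, fed_sphere phi eta -> fed_sphere phi zeta ->
          phi (eta - zeta) <= r ->
          fed_opnorm phi (fun v => fed_pi phi eta v - fed_pi phi zeta v) <= 1 - eps].

(* Main.v *)
Require Import Defs.
From HB Require Import structures.
From mathcomp Require Import all_boot all_order all_algebra.
From mathcomp Require Import all_classical all_reals all_analysis.
From mathcomp Require Import ring lra.
Import Order.TTheory GRing.Theory Num.Theory.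
Import numFieldNormedType.Exports.
Local Open Scope classical_set_scope.
Local Open Scope ring_scope.



Lemma phi0 (R : realType) n (phi : 'rV[R]_n -> R) : fed_is_norm phi -> phi 0 = 0.
Proof. by case=> _ hZ _; rewrite -(scale0r (0:'rV[R]_n)) hZ normr0 mul0r. Qed.

Lemma phiN (R : realType) n (phi : 'rV[R]_n -> R) x : fed_is_norm phi -> phi (- x) = phi x.
Proof. by case=> _ hZ _; rewrite -scaleN1r hZ normrN normr1 mul1r. Qed.

Lemma phi_ge0 (R : realType) n (phi : 'rV[R]_n -> R) x : fed_is_norm phi -> 0 <= phi x.
Proof.
move=> Hn; have := Hn; case=> _ _ ht; have := ht x (- x).
rewrite subrr phi0 // phiN //; lra.
Qed.

Lemma phiB (R : realType) n (phi : 'rV[R]_n -> R) x y : fed_is_norm phi -> phi (x - y) = phi (y - x).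
Proof. by move=> Hn; rewrite -phiN // opprB. Qed.

Lemma subgrad (R : realType) n (phi : 'rV[R]_n -> R) x v : fed_is_norm phi ->
  differentiable phi x -> 'd phi x v <= phi (x + v) - phi x.
Proof.
move=> Hn dx; rewrite -deriveE //.
have dv := @diff_derivable _ _ _ _ _ v dx.
rewrite /derive.
set q := (fun h : R => _).
have Hr : q @ 0^'+ --> lim (q @ 0^').
  have sub : (0:R)^'+ `=>` (0:R)^'.
    move=> A; rewrite /dnbhs /within /=; apply: filterS => y Ay y0.
    by apply: Ay; rewrite gt_eqF.
  have dv' : q @ 0^' --> lim (q @ 0^') := dv.
  apply: cvg_trans dv'; exact: cvg_app sub.
apply: (cvgr_to_le Hr).
near=> h.
have h0 : 0 < h by near: h; exact: nbhs_right_gt.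
have h1 : h <= 1 by near: h; apply: nbhs_right_le; exact: ltr01.
rewrite /q /=.
case: Hn => _ hZ ht.
have E : h *: v + x = h *: (x + v) + (1 - h) *: x.
  by apply/rowP => i; rewrite !mxE; ring.
have : phi (h *: v + x) <= h * phi (x + v) + (1 - h) * phi x.
  rewrite E; apply: le_trans (ht _ _) _.
  by rewrite !hZ (ger0_norm (ltW h0)) ger0_norm ?subr_ge0.
move=> H.
rewrite -[_ *: _]/(h^-1 * _) ler_pdivrMl //; lra.
Unshelve. all: by end_near. Qed.



Lemma euler (R : realType) n (phi : 'rV[R]_n -> R) x : fed_is_norm phi ->
  differentiable phi x -> 'd phi x x = phi x.
Proof.
move=> Hn dx; have h1 := @subgrad _ _ _ x x Hn dx; have h2 := @subgrad _ _ _ x (- x) Hn dx.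
move: h1 h2; rewrite subrr phi0 // linearN /=.
have -> : x + x = 2 *: x by rewrite scaler_nat mulr2n.
case: (Hn) => _ hZ _; rewrite hZ ger0_norm //; lra.
Qed.

Lemma dual_le (R : realType) n (phi : 'rV[R]_n -> R) x w : fed_is_norm phi ->
  differentiable phi x -> phi x = 1 -> 'd phi x w <= phi w.
Proof.
move=> Hn dx x1; have := @subgrad _ _ _ x w Hn dx; rewrite x1.
case: (Hn) => _ _ ht; have := ht x w; rewrite x1; lra.
Qed.

Lemma dual_abs (R : realType) n (phi : 'rV[R]_n -> R) x w : fed_is_norm phi ->
  differentiable phi x -> phi x = 1 -> `|'d phi x w| <= phi w.
Proof.
move=> Hn dx x1; have h1 := @dual_le _ _ _ x w Hn dx x1; have := @dual_le _ _ _ x (- w) Hn dx x1.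
rewrite linearN phiN //= => h2; rewrite ler_norml; apply/andP; split; lra.
Qed.

Definition scl (R : realType) n (k : R) (v : 'rV[R]_n) : 'rV[R]_n := k *: v.

Lemma scl_is_bilinear (R : realType) n :
  bilinear_for
    (GRing.Scale.Law.clone _ _ *:%R _) (GRing.Scale.Law.clone _ _ *:%R _)
    (@scl R n).
Proof.
split=> [u'|u] a x y /=; rewrite /scl.
- by rewrite scalerDl scalerA.
- by rewrite scalerDr !scalerA mulrC.
Qed.
HB.instance Definition _ (R : realType) n :=
  bilinear_isBilinear.Build R R^o 'rV[R]_n 'rV[R]_n _ _ (@scl R n)
  (@scl_is_bilinear R n).

Lemma pi_formula (R : realType) n (phi : 'rV[R]_n -> R) x v : fed_is_norm phi ->
  differentiable phi x -> phi x = 1 -> fed_pi phi x v = v - 'd phi x v *: x.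
Proof.
move=> Hn dx x1.
have px0 : phi x != 0 by rewrite x1 oner_neq0.
have E : fed_xi phi = (fun q : R^o * 'rV[R]_n => @scl R n q.1 q.2) \o (fun y => ((phi y)^-1, y)).
  by apply/funext => y.
have cs : continuous (fun q : R^o * 'rV[R]_n => @scl R n q.1 q.2).
  exact: scale_continuous.
have dinv := differentiableV dx px0.
have did : differentiable (@id 'rV[R]_n) x by exact: ex_diff.
have Did : 'd (@id 'rV[R]_n) x v = v by rewrite diff_val.
rewrite /fed_pi E diff_comp /=; last 2 first.
- exact: differentiable_pair.
- exact: differentiable_bilin.
rewrite diff_pair // (diff_bilin _ cs) /= diffV //.
rewrite Did /scl /= x1 expr1n invr1 scale1r scaleN1r scaleNr.
by [].
Qed.

Lemma piDiff (R : realType) n (phi : 'rV[R]_n -> R) x z : fed_is_norm phi ->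
  differentiable phi x -> phi x = 1 -> differentiable phi z -> phi z = 1 ->
  fed_pi phi x x - fed_pi phi z x = 'd phi z x *: z - x.
Proof.
move=> Hn dx x1 dz z1.
have E := @pi_formula _ _ _ x x Hn dx x1.
have Ee : 'd phi x x = 1 by rewrite (@euler _ _ _ x Hn dx) x1.
rewrite Ee scale1r subrr in E.
by rewrite E (@pi_formula _ _ _ z x Hn dz z1) add0r opprB.
Qed.

Lemma lowerb (R : realType) n (phi : 'rV[R]_n -> R) x z (c : R) : fed_is_norm phi ->
  differentiable phi x -> phi x = 1 -> 1 - c * 'd phi x z <= phi (x - c *: z).
Proof.
move=> Hn dx x1.
have H := @dual_le _ _ _ x (x - c *: z) Hn dx x1.
have Ee : 'd phi x x = 1 by rewrite (@euler _ _ _ x Hn dx) x1.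
by rewrite linearB linearZ /= Ee in H.
Qed.



Lemma sph_neq0 (R : realType) n (phi : 'rV[R]_n -> R) x : fed_is_norm phi ->
  phi x = 1 -> x != 0.
Proof. by move=> Hn x1; apply/eqP => x0; move: x1; rewrite x0 phi0 //; lra. Qed.
Arguments sph_neq0 {R n phi x}.

Lemma vecid1 (R : realType) n (x u v : 'rV[R]_n) (a b : R) :
  x - a *: u - (x - b *: v) = b *: v + (- a) *: u.
Proof. by apply/rowP => i; rewrite !mxE; ring. Qed.

Lemma keyG (R : realType) n (phi : 'rV[R]_n -> R) (eps : R) eta zeta r :
  fed_is_norm phi -> (forall x, x != 0 -> differentiable phi x) -> 0 < eps ->
  phi eta = 1 -> phi zeta = 1 ->
  (0 < r < 1 /\ forall eta zeta, fed_sphere phi eta -> fed_sphere phi zeta ->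
          phi (eta - zeta) <= r ->
          fed_opnorm phi (fun v => fed_pi phi eta v - fed_pi phi zeta v) <= 1 - eps) ->
  phi (eta - zeta) <= r -> eps <= 'd phi zeta eta.
Proof.
move=> Hn Hd e0 e1 z1 [/andP[r0 r1] Q] der.
have de := Hd _ (sph_neq0 Hn e1); have dz := Hd _ (sph_neq0 Hn z1).
have := Q eta zeta e1 z1 der.
rewrite /fed_opnorm.
set B := [set _ | _ in _].
have hB : has_ubound B.
  exists 2 => y [x /= hx <-].
  rewrite !pi_formula //.
  rewrite vecid1.
  case: (Hn) => _ hZ ht; apply: le_trans (ht _ _) _.
  rewrite !hZ e1 z1 !mulr1 normrN.
  apply: le_trans (lerD (@dual_abs _ _ _ zeta x Hn dz z1) (@dual_abs _ _ _ eta x Hn de e1)) _.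
  move: hx; generalize (phi x) => t; lra.
move=> H2.
have H3 : phi ('d phi zeta eta *: zeta - eta) <= 1 - eps.
  apply: le_trans H2.
  rewrite -(@piDiff _ _ _ eta zeta Hn de e1 dz z1).
  by apply: ub_le_sup => //; exists eta => //=; rewrite e1.
set c := 'd phi zeta eta in H3 *.
clear H2 hB B.
rewrite -phiN // opprB in H3.
have H4 := @lowerb _ _ _ eta zeta c Hn de e1.
have H5 := @lowerb _ _ _ eta zeta 1 Hn de e1.
rewrite scale1r mul1r in H5.
have H6 := @dual_le _ _ _ eta zeta Hn de e1.
rewrite z1 in H6.
move: der H3 H4 H5 H6.
set a := 'd phi eta zeta. set u := phi (eta - c *: zeta). set v := phi (eta - zeta).
clearbody a u v c => der H3 H4 H5 H6.
have ca : eps <= c * a by lra.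
have a0 : 0 < a by lra.
have c0 : 0 < c.
  rewrite ltNge; apply/negP => c0.
  have : c * a <= 0 by rewrite mulr_le0_ge0 // ltW.
  lra.
have : c * a <= c by rewrite ler_piMr // ltW.
lra.
Qed.



Lemma fed_approx (R : realType) n (phi : 'rV[R]_n -> R) eta z2 s :
  fed_is_norm phi -> fed_strictly_convex phi ->
  phi eta = 1 -> phi z2 = 1 -> 0 < phi (eta - z2) <= 1 -> 0 < s < 1 ->
  let w := z2 + s *: (eta - z2) in
  0 < phi w /\
  phi ((phi w)^-1 *: w) = 1 /\ phi (eta - (phi w)^-1 *: w) < phi (eta - z2).
Proof.
move=> Hn Hsc e1 z1 /andP[r0 r1] /andP[s0 s1] w.
set d := eta - z2 in r0 r1 w *; set rho := phi d in r0 r1 *.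
have Hn' := Hn; case: Hn' => _ hZ ht.
have hw : w = (1 - s) *: z2 + s *: eta by apply/rowP => i; rewrite !mxE; ring.
have p1 : phi w <= 1.
  rewrite hw; apply: le_trans (ht _ _) _.
  rewrite !hZ z1 e1 !ger0_norm ?subr_ge0 //; [lra|exact: ltW|exact: ltW].
have hz : z2 = w + (- (s *: d)) by apply/rowP => i; rewrite !mxE; ring.
have sd : phi (- (s *: d)) = s * rho by rewrite phiN // hZ ger0_norm // ltW.
have p2 : 1 - s * rho <= phi w.
  have := ht w (- (s *: d)); rewrite -hz z1 sd; lra.
have srho : s * rho <= s by rewrite ler_piMr // ltW.
have p0 : 0 < phi w by lra.
set p := phi w in p0 p1 p2 srho *.
have pn0 : p != 0 by rewrite gt_eqF.
split => //; split.
  by rewrite hZ ger0_norm ?invr_ge0 ?ltW // mulVf.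
have hE : eta - p^-1 *: w = (1 - s) *: d + (- (p^-1 - 1)) *: w.
  by apply/rowP => i; rewrite /w !mxE; ring.
have hb : phi (eta - p^-1 *: w) <= (1 - s) * rho + 1 - p.
  rewrite hE; apply: le_trans (ht _ _) _.
  have ps : 0 <= p^-1 - 1 by rewrite subr_ge0 invf_ge1.
  have s1' : 0 <= 1 - s by lra.
  rewrite !hZ normrN (ger0_norm s1') (ger0_norm ps) -/rho -/p.
  have -> : (p^-1 - 1) * p = 1 - p by rewrite mulrBl mulVf // mul1r.
  lra.
have [plt|pge] := ltP (1 - s * rho) p; first by lra.
have pE : p = 1 - s * rho by lra.
exfalso.
have := Hsc w (- (s *: d)); rewrite -hz z1 sd -/p.
move=> /(_ ltac:(lra)) H.
have he : eta = (1 - rho) *: z2.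
  apply/rowP => i.
  have := congr1 (fun v : 'rV[R]_n => v ord0 i) H; rewrite /w /d !mxE => Hi.
  have : s * (eta ord0 i - (1 - rho) * z2 ord0 i) = 0.
    transitivity (s * rho * (z2 ord0 i + s * (eta ord0 i - z2 ord0 i))
      + p * s * (eta ord0 i - z2 ord0 i)); first by rewrite pE; ring.
    rewrite Hi; ring.
  move/eqP; rewrite mulf_eq0 gt_eqF //= subr_eq0 => /eqP ->.
  by [].
move: e1; rewrite he hZ z1 mulr1 ger0_norm ?subr_ge0 //; lra.
Qed.



Lemma noshift (R : realType) n (phi : 'rV[R]_n -> R) (eps : R) eta z1 z2 t :
  fed_is_norm phi -> fed_strictly_convex phi -> fed_C1_off_zero phi -> 0 < eps < 1 ->
  phi eta = 1 -> phi z1 = 1 -> phi z2 = 1 -> phi (z2 - eta) <= fed_radius phi eps ->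
  0 < t -> z1 = z2 + t *: eta -> False.
Proof.
move=> Hn Hsc [Hd Hc] /andP[e0 e1] s1 s1' s2 hz2 t0 hz.
rewrite /fed_radius in hz2.
set A := [set r | _] in hz2.
have dz2 := Hd _ (sph_neq0 Hn s2).
have de := Hd _ (sph_neq0 Hn s1).
have c0 : 'd phi z2 eta <= 0.
  have := @subgrad _ _ _ z2 (t *: eta) Hn dz2.
  by rewrite -hz s1' s2 subrr linearZ /= pmulr_rle0.
have zne : z2 != eta.
  apply/eqP => E; move: c0; rewrite E (@euler _ _ _ eta Hn de) s1; lra.
rewrite phiB // in hz2.
have r0 : 0 < phi (eta - z2).
  rewrite lt_neqAle phi_ge0 // andbT; apply/eqP => /esym H.
  case: (Hn) => H0 _ _; move/H0: H => /eqP; rewrite subr_eq0 eq_sym.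
  by rewrite (negbTE zne).
have Ane : A !=set0.
  case: (pselect (A !=set0)) => // nA; exfalso.
  have A0 : A = set0 by apply/seteqP; split => // x Ax; apply: nA; exists x.
  by move: hz2; rewrite A0 sup0; lra.
have Rle1 : sup A <= 1 by apply: ge_sup => // r [/andP[_ /ltW]].
have G : forall zeta, phi zeta = 1 -> phi (eta - zeta) < sup A -> eps <= 'd phi zeta eta.
  move=> zeta hzt hlt; have [r Ar hr] := sup_gt Ane hlt.
  exact: (@keyG _ _ _ eps eta zeta r Hn Hd e0 s1 hzt Ar (ltW hr)).
have [lt|ge] := ltP (phi (eta - z2)) (sup A).
  by have := le_trans (G z2 s2 lt) c0; lra.
have rE : phi (eta - z2) = sup A by apply/eqP; rewrite eq_le hz2 ge.
pose w := fun s : R => z2 + s *: (eta - z2).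
pose zeta := fun s : R => (phi (w s))^-1 *: w s.
have Hs : forall s, 0 < s < 1 -> eps <= 'd phi (zeta s) eta.
  move=> s hs.
  have r01 : 0 < phi (eta - z2) <= 1 by rewrite r0 rE Rle1.
  have [p0 [pz lt]] := @fed_approx _ _ _ eta z2 s Hn Hsc s1 s2 r01 hs.
  by apply: G => //; rewrite -rE.
have cw : w s @[s --> 0] --> z2.
  rewrite [X in _ --> X](_ : z2 = z2 + 0 *: (eta - z2)); last by rewrite scale0r addr0.
  apply: cvgD; first exact: cvg_cst.
  apply: cvgZ; [exact: cvg_id | exact: cvg_cst].
have cp : phi (w s) @[s --> 0] --> phi z2.
  apply: cvg_comp cw _; exact: differentiable_continuous dz2.
rewrite s2 in cp.
have cz : zeta s @[s --> 0] --> z2.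
  rewrite [X in _ --> X](_ : z2 = 1^-1 *: z2); last by rewrite invr1 scale1r.
  apply: cvgZ => //; apply: cvgV => //; exact: oner_neq0.
have ch : 'd phi (zeta s) eta @[s --> 0] --> 'd phi z2 eta.
  have zin : z2 \in [set x | x != 0] by rewrite inE; exact: sph_neq0 Hn s2.
  have hc := Hc eta z2 zin.
  exact: (cvg_comp _ _ cz hc).
have ch' := cvg_at_right_filter ch.
have : eps <= 'd phi z2 eta.
  apply: (cvgr_to_ge ch'); near=> s; apply: Hs; apply/andP; split.
    by near: s; exact: nbhs_right_gt.
  by near: s; apply: nbhs_right_lt; exact: ltr01.
by move/le_trans/(_ c0); lra.
Unshelve. all: by end_near. Qed.



Lemma vecid2 (R : realType) n (x y e : 'rV[R]_n) (a b : R) :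
  x - a *: e = y - b *: e -> x = y + (a - b) *: e.
Proof.
move=> H; apply/rowP => i; have := congr1 (fun v : 'rV[R]_n => v ord0 i) H.
rewrite !mxE => Hi.
have -> : x 0 i = (x ord0 i - a * e ord0 i) + a * e ord0 i by ring.
by rewrite Hi; ring.
Qed.

Lemma vecid3 (R : realType) n (x y e : 'rV[R]_n) (t : R) :
  x = y + t *: e -> y = x + (- t) *: e.
Proof. by move=> ->; apply/rowP => i; rewrite !mxE; ring. Qed.

Theorem lemma3p6 (R : realType) (n : nat) (phi : 'rV[R]_n -> R) (eps : R) :
  fed_is_norm phi -> fed_strictly_convex phi -> fed_C1_off_zero phi ->
  0 < eps < 1 ->
  forall eta, fed_sphere phi eta ->
  {in (fed_sphere phi `&` [set z | phi (z - eta) <= fed_radius phi eps]) &,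
     injective (fed_pi phi eta)}.
Proof.
move=> Hn Hsc HC He eta s1 z1 z2; rewrite !inE => -[S1 B1] [S2 B2] Hpi.
have Hd := HC.1.
have de := Hd _ (sph_neq0 Hn s1).
have d1 := Hd _ (sph_neq0 Hn S1).
have d2 := Hd _ (sph_neq0 Hn S2).
rewrite (@pi_formula _ _ _ eta z1 Hn de s1) (@pi_formula _ _ _ eta z2 Hn de s1) in Hpi.
have hz := @vecid2 _ _ _ _ _ _ _ Hpi.
move: hz; set t := _ - _ => hz.
case: (ltgtP t 0) => ht.
- exfalso; have hz' := @vecid3 _ _ _ _ _ _ hz.
  apply: (@noshift _ _ _ eps eta z2 z1 (- t) Hn Hsc HC He s1 S2 S1 B1) => //.
  by rewrite oppr_gt0.
- by exfalso; apply: (@noshift _ _ _ eps eta z1 z2 t Hn Hsc HC He s1 S1 S2 B2).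
- by rewrite hz ht scale0r addr0.
Qed.
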